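(* Every $1$-Sperner hypergraph ${\cal H}=(V,{\cal E})$ is equilizable, i.e., there exist a weight function $w:V\to\mathbb{Z}_{\ge0}$ and a threshold $t\in\mathbb{Z}_{\ge0}$ such that for every $X\subseteq V$, $\sum_{x\in X}w(x)=t$ if and only if $X\in{\cal E}$.
   Context: A hypergraph ${\cal H}=(V,{\cal E})$ consists of a finite vertex set $V$ and a set ${\cal E}$ of subsets of $V$. It is $1$-Sperner if every two distinct hyperedges $e,f$ satisfy $\min\{|e\setminus f|,|f\setminus e|\}=1$. *)

(* Defs.v *)
From mathcomp Require Import all_boot.
Set Implicit Arguments. Unset Strict Implicit. Unset Printing Implicit Defensive.

Definition one_Sperner (V : finType) (E : {set {set V}}) : Prop :=
  forall e f, e \in E -> f \in E -> e != f ->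
    minn #|e :\: f| #|f :\: e| = 1.

Definition equilizable (V : finType) (E : {set {set V}}) : Prop :=
  exists (w : V -> nat) (t : nat),
    forall X : {set V}, (\sum_(x in X) w x = t) <-> X \in E.

(* Main.v *)
Require Import Defs.
From mathcomp Require Import all_boot zify.
Set Implicit Arguments. Unset Strict Implicit. Unset Printing Implicit Defensive.

Section S.
Variable V : finType.
Implicit Types (E : {set {set V}}) (e f g h U X : {set V}).

Definition good E z := forall e f, e \in E -> f \in E -> z \in e -> z \notin f ->
  e :\ z \subset f.

Lemma sp_sub E e f : one_Sperner E -> e \in E -> f \in E -> e \subset f -> e = f.
Proof.
move=> H eE fE sef; apply/eqP; apply/negPn/negP => nef.
have := H _ _ eE fE nef; rewrite (_ : e :\: f = set0) ?cards0 ?min0n //.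
by apply/eqP; rewrite setD_eq0.
Qed.

Lemma sp_other E e f : one_Sperner E -> e \in E -> f \in E -> 2 <= #|e :\: f| ->
  #|f :\: e| = 1.
Proof.
move=> H eE fE h2; have nef : e != f.
  by apply/eqP => ef; move: h2; rewrite ef setDv cards0.
have := H _ _ eE fE nef; rewrite /minn; case: ifP => //; lia.
Qed.

Lemma card2 (A : {set V}) x y : x \in A -> y \in A -> x != y -> 2 <= #|A|.
Proof.
move=> xA yA nxy; have := cards2 x y; rewrite nxy => <-; apply: subset_leq_card.
by apply/subsetP => a; rewrite !inE => /orP[] /eqP ->.
Qed.

Lemma card1_elt (A : {set V}) x : #|A| = 1 -> x \in A -> A = [set x].
Proof.
by move=> /eqP /cards1P [a ->]; rewrite inE => /eqP ->.
Qed.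

Lemma diff1 (A B : {set V}) u : A :\: B = [set u] ->
  [/\ u \in A, u \notin B & forall x, x \in A -> x != u -> x \in B].
Proof.
move=> AB; have : u \in A :\: B by rewrite AB inE.
rewrite inE => /andP[uB uA]; split => // x xA xu; apply/negPn/negP => xB.
have : x \in A :\: B by rewrite inE xB xA.
by rewrite AB inE (negbTE xu).
Qed.

Lemma good_exists E U z0 : one_Sperner E -> (forall e, e \in E -> e \subset U) ->
  z0 \in U -> exists2 z, z \in U & good E z.
Proof.
move=> HS HU z0U.
pose P := fun p : {set V} * {set V} => [&& p.1 \in E, p.2 \in E & 2 <= #|p.1 :\: p.2|].
case: (boolP [exists p, P p]); last first.
  move=> /existsPn nP; exists z0 => // e f eE fE ze zf.
  apply/subsetP => y; rewrite !inE => /andP[nyz ye]; apply/negPn/negP => yf.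
  have := nP (e, f); rewrite /P /= eE fE /=; rewrite -leqNgt => h.
  have : 2 <= #|e :\: f| by apply: (card2 (x := z0) (y := y)); rewrite ?inE ?ze ?ye ?zf ?yf // eq_sym.
  lia.
move=> /existsP [p0 Pp0].
case: (arg_maxnP (fun p => #|p.1 :\: p.2|) Pp0) => [[e f]] /and3P[/= eE fE d2] Hmax.
have Hm : forall g h, g \in E -> h \in E -> #|g :\: h| <= #|e :\: f|.
  move=> g h gE hE; case: (leqP 2 #|g :\: h|) => hh.
    by apply: (Hmax (g, h)); rewrite /P /= gE hE.
  lia.
have fe1 := sp_other HS eE fE d2.
case/eqP/cards1P: (fe1) => u fe.
case: (diff1 fe) => uf ue fsub.
exists u; first by apply: (subsetP (HU _ fE)).
move=> e2 f2 e2E f2E ue2 uf2; apply/subsetP => y; rewrite !inE => /andP[yu ye2].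
apply/negPn/negP => yf2.
case: (leqP 2 #|e2 :\: e|) => c2.
-
  case/eqP/cards1P: (sp_other HS e2E eE c2) => v ev.
  case: (diff1 ev) => ve ve2 esub.
  case: (boolP (v \in f)) => vf.
  + (* contradiction with max *)
    have [w wu we2e] : exists2 w, w != u & w \in e2 :\: e.
      have : ~~ (e2 :\: e \subset [set u]).
        apply/negP => /subset_leq_card; rewrite cards1 => hh; move: hh; apply/negP; rewrite -ltnNge; exact: c2.
      case/subsetPn => w wD; rewrite inE => wu; by exists w.
    have : #|e :\: f| < #|e2 :\: f|.
      apply: proper_card; apply/properP; split.
        apply/subsetP => x; rewrite !inE => /andP[xf xe]; rewrite xf /=.
        apply: esub => //; apply/eqP => xv; move: xf; rewrite xv vf.
        done.
      exists w.
        move: we2e; rewrite !inE => /andP[we we2]; rewrite we2 andbT.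
        apply/negP => wf; move: (fsub _ wf wu); by rewrite (negbTE we).
      by move: we2e; rewrite !inE => /andP[we _]; rewrite (negbTE we) andbF.
    move=> h2; have := Hm _ _ e2E fE; by rewrite leqNgt h2.
  +
    have sfe2 : f \subset e2.
      apply/subsetP => x xf; case: (eqVneq x u) => [-> //|xu].
      apply: esub; first exact: fsub.
      by apply/eqP => xv; move: vf; rewrite -xv xf.
    have fe2 := sp_sub HS fE e2E sfe2.
    have [w wv wD] : exists2 w, w != v & w \in e :\: f.
      have : ~~ (e :\: f \subset [set v]).
        apply/negP => /subset_leq_card; rewrite cards1 => hh; move: hh; apply/negP; rewrite -ltnNge; exact: d2.
      case/subsetPn => w wD; rewrite inE => wv; by exists w.
    move: wD; rewrite inE => /andP[wf we].
    by move: (esub _ we wv); rewrite -fe2 (negbTE wf).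
-
  have e2e : e2 :\: e = [set u].
    apply: card1_elt; last by rewrite inE ue ue2.
    have : 0 < #|e2 :\: e| by apply/card_gt0P; exists u; rewrite inE ue ue2.
    move=> h0; clear -c2 h0; lia.
  case: (diff1 e2e) => _ _ e2sub.
  have ye : y \in e := e2sub _ ye2 yu.
  have d22 : 2 <= #|e2 :\: f2|.
    by apply: (card2 (x := u) (y := y)); rewrite ?inE ?ue2 ?ye2 ?uf2 ?yf2 // eq_sym.
  case/eqP/cards1P: (sp_other HS e2E f2E d22) => u2 f2e2.
  case: (diff1 f2e2) => u2f2 u2e2 f2sub.
  have u2e : u2 \notin e.
    apply/negP => u2e.
    have sf2e : f2 \subset e.
      apply/subsetP => x xf2; case: (eqVneq x u2) => [-> //|xu2].
      apply: e2sub; first exact: f2sub.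
      by apply/eqP => xu; move: uf2; rewrite -xu xf2.
    by move: yf2; rewrite (sp_sub HS f2E eE sf2e) ye.
  have f2e : f2 :\: e = [set u2].
    apply/setP => x; rewrite !inE; apply/andP/eqP => [[xe xf2]|->]; last by [].
    apply/eqP; apply/negPn/negP => xu2.
    have xu : x != u by apply/eqP => xu; move: uf2; rewrite -xu xf2.
    by move: (e2sub _ (f2sub _ xf2 xu2) xu); rewrite (negbTE xe).
  have k1 := cardsID e f. have k2 := cardsID e f2.
  have c3 := cardsID f e. have c4 := cardsID f2 e.
  have c5 := Hm _ _ eE f2E.
  rewrite f2e cards1 in k2. rewrite fe cards1 in k1.
  rewrite (setIC e) in c3; rewrite (setIC e) in c4.
  have c6 := cardsID f f2. have c7 := cardsID f2 f.
  rewrite setIC in c7.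
  have nff2 : f != f2 by apply/eqP => ff2; move: uf2; rewrite -ff2 uf.
  have c8 := HS _ _ fE f2E nff2.
  have ff21 : #|f :\: f2| = 1 by move: c8; rewrite /minn; case: ifP => h8 c8; clear -h8 c8 k1 k2 c3 c4 c5 c6 c7; lia.
  have ff2 : f :\: f2 = [set u] by apply: card1_elt; rewrite // inE uf uf2.
  case: (diff1 ff2) => _ _ fsub2.
  have sfe2 : f \subset e2.
    apply/subsetP => x xf; case: (eqVneq x u) => [-> //|xu].
    apply: f2sub; first exact: fsub2.
    by apply/eqP => xu2; move: u2e; rewrite -xu2 (fsub _ xf xu).
  have fe2 := sp_sub HS fE e2E sfe2.
  have yf : y \notin f by apply/negP => yf; move: yf2; rewrite (fsub2 _ yf yu).
  by move: yf; rewrite fe2 ye2.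
Qed.

Lemma sum_split (w : V -> nat) (A B : {set V}) :
  A \subset B -> \sum_(x in B) w x = \sum_(x in A) w x + \sum_(x in B :\: A) w x.
Proof.
move=> AB; rewrite (@big_setID _ _ _ _ B A); congr (_ + _).
by apply: eq_bigl => x; rewrite inE; case: (boolP (x \in A)) => xA;
  rewrite ?andbT ?andbF ?(subsetP AB) //.
Qed.

Lemma sum_le (w : V -> nat) (A B : {set V}) : A \subset B -> \sum_(x in A) w x <= \sum_(x in B) w x.
Proof. by move=> AB; rewrite (sum_split w AB) leq_addr. Qed.

Lemma sum_eq_sub (w : V -> nat) (A B : {set V}) : A \subset B -> (forall x, x \in B -> 0 < w x) ->
  \sum_(x in A) w x = \sum_(x in B) w x -> A = B.
Proof.
move=> AB wp; rewrite (sum_split w AB) => h.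
have h0 : \sum_(x in B :\: A) w x = 0 by lia.
apply/eqP; rewrite eqEsubset AB /=; apply/subsetP => x xB.
apply/negPn/negP => xA.
have xD : x \in B :\: A by rewrite inE xA xB.
move: h0; rewrite (bigD1 x) //=; have := wp _ xB; lia.
Qed.

Lemma sum_eq0 (w : V -> nat) (B : {set V}) : (forall x, x \in B -> 0 < w x) ->
  \sum_(x in B) w x = 0 -> B = set0.
Proof.
move=> wp h; symmetry; apply: (sum_eq_sub (w := w)) => //; first exact: sub0set.
by rewrite big_set0.
Qed.

Lemma setUD_disj (A Y1 Y2 : {set V}) : [disjoint A & Y1] ->
  (A :|: Y1) :\: (A :|: Y2) = Y1 :\: Y2.
Proof.
move=> dis; apply/setP => x; rewrite !inE.
case: (boolP (x \in A)) => xA /=; last by [].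
by rewrite (disjointFr dis xA) andbF.
Qed.

Lemma setU_inj_disj (A Y1 Y2 : {set V}) : [disjoint A & Y1] -> [disjoint A & Y2] ->
  A :|: Y1 = A :|: Y2 -> Y1 = Y2.
Proof.
move=> d1 d2 h; apply/setP => x.
have := congr1 (fun S : {set V} => x \in S) h => /=; rewrite !inE.
case: (boolP (x \in A)) => xA //=.
by rewrite (disjointFr d1 xA) (disjointFr d2 xA).
Qed.

Lemma sp_transfer E (A : {set V}) (E1 : {set {set V}}) : one_Sperner E ->
  (forall Y, Y \in E1 -> [disjoint A & Y] /\ A :|: Y \in E) -> one_Sperner E1.
Proof.
move=> HS H Y1 Y2 Y1E Y2E n12.
case: (H _ Y1E) => d1 e1; case: (H _ Y2E) => d2 e2.
have n : A :|: Y1 != A :|: Y2.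
  by apply/negP => /eqP /(setU_inj_disj d1 d2) h; move: n12; rewrite h eqxx.
by have := HS _ _ e1 e2 n; rewrite !setUD_disj.
Qed.

Lemma modeq a b c d M : a < M -> b < M -> a + M * c = b + M * d -> a = b /\ c = d.
Proof.
move=> aM bM h.
have ha : (a + M * c) %% M = a by rewrite addnC mulnC modnMDl modn_small.
have hb : (b + M * d) %% M = b by rewrite addnC mulnC modnMDl modn_small.
have ab : a = b by rewrite -ha -hb h.
split => //; subst b; have : M * c = M * d by lia.
by move/eqP; rewrite eqn_mul2l; case/orP => [/eqP M0|/eqP //]; lia.
Qed.

Lemma ar1 a b m tt t1 : m <= m * b -> t1 < m -> t1 < tt ->
  a + m * b + (tt - t1) = tt -> False.
Proof. lia. Qed.

Lemma ar2 a tt t1 : t1 < tt -> a + (tt - t1) = tt -> a = t1.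
Proof. lia. Qed.

Definition eqz E U := exists (w : V -> nat) (t : nat),
  (forall x, x \in U -> 0 < w x) /\
  (forall X, X \subset U -> (\sum_(x in X) w x = t <-> X \in E)).

Lemma main n : forall U E, #|U| <= n -> one_Sperner E ->
  (forall e, e \in E -> e \subset U) -> eqz E U.
Proof.
elim: n => [|n IH] U E hU HS HE.
  have U0 : U = set0 by apply/eqP; rewrite -cards_eq0; lia.
  exists (fun _ => 1), (if set0 \in E then 0 else 1); split => // X XU.
  have X0 : X = set0 by apply/eqP; rewrite -subset0 -U0.
  rewrite X0 big_set0; case: (set0 \in E); split => //.
case: (leqP #|U| n) => hn; first exact: IH.
have [z0 z0U] : exists z, z \in U by apply/card_gt0P; move: hn; clear; lia.
case: (good_exists HS HE z0U) => z zU gz.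
have cU' : #|U :\ z| <= n by move: (cardsD1 z U) hU; rewrite zU; clear; lia.
case: (boolP [exists e in E, z \in e]); last first.
  move=> /exists_inPn nz.
  have HE' : forall e, e \in E -> e \subset U :\ z.
    move=> e eE; apply/subsetP => x xe; rewrite !inE (subsetP (HE _ eE)) // andbT.
    by apply/eqP => xz; move: (nz _ eE); rewrite -xz xe.
  case: (IH _ _ cU' HS HE') => w' [t' [wp' Hw']].
  exists (fun x => if x == z then t'.+1 else w' x), t'; split.
    move=> x xU; case: eqP => // /eqP xz; apply: wp'; by rewrite !inE xz.
  move=> X XU; case: (boolP (z \in X)) => zX.
    rewrite (bigD1 z) //= eqxx; split; first by move=> h; clear -h; lia.
    by move=> XE; move: (nz _ XE); rewrite zX.
  have XU' : X \subset U :\ z.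
    apply/subsetP => x xX; rewrite !inE (subsetP XU) // andbT.
    by apply/eqP => xz; move: zX; rewrite -xz xX.
  rewrite -(Hw' _ XU'); rewrite (eq_bigr w') //.
  by move=> x xX; case: eqP => // xz; move: zX; rewrite -xz xX.
move=> /exists_inP [e0 e0E ze0].
pose V1 := [set x in U | (x != z) && [forall f in E, (z \notin f) ==> (x \in f)]].
pose V2 := (U :\ z) :\: V1.
have V1U : V1 \subset U :\ z.
  by apply/subsetP => x; rewrite !inE => /andP[xU /andP[xz _]]; rewrite xU xz.
have V2U : V2 \subset U :\ z by apply: subsetDl.
have dV12 : [disjoint V1 & V2].
  by rewrite disjoints_subset; apply/subsetP => x xV1; rewrite in_setC in_setD xV1.
have zV1 : z \notin V1 by rewrite !inE eqxx andbF.
have zV2 : z \notin V2 by rewrite !inE eqxx andbF.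
pose E1 := [set Y : {set V} | (Y \subset V1) && ([set z] :|: Y \in E)].
pose E2 := [set Y : {set V} | (Y \subset V2) && (V1 :|: Y \in E)].
have HS1 : one_Sperner E1.
  apply: (sp_transfer (A := [set z]) HS) => Y; rewrite inE => /andP[YV1 YE]; split => //.
  rewrite disjoints1; apply/negP => zY; move: zV1; by rewrite (subsetP YV1).
have HS2 : one_Sperner E2.
  apply: (sp_transfer (A := V1) HS) => Y; rewrite inE => /andP[YV2 YE]; split => //.
  exact: disjointWr YV2 dV12.
have c1 : #|V1| <= n by apply: leq_trans cU'; apply: subset_leq_card.
have c2 : #|V2| <= n by apply: leq_trans cU'; apply: subset_leq_card.
case: (IH _ E1 c1 HS1) => [Y|w1 [t1 [wp1 Hw1]]].
  by rewrite inE => /andP[].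
case: (IH _ E2 c2 HS2) => [Y|w2 [t2 [wp2 Hw2]]].
  by rewrite inE => /andP[].
have Hz : forall X, X \subset U -> z \in X -> X \in E -> X :\ z \subset V1.
  move=> X XU zX XE; apply/subsetP => x; rewrite !inE => /andP[xz xX].
  rewrite (subsetP XU) // xz /=; apply/forall_inP => f fE; apply/implyP => zf.
  by apply: (subsetP (gz _ _ XE fE zX zf)); rewrite !inE xz.
have Hnz : forall X, X \in E -> z \notin X -> V1 \subset X.
  move=> X XE zX; apply/subsetP => x; rewrite inE => /andP[_ /andP[_ /forall_inP h]].
  by apply: (implyP (h _ XE)).
pose S1 := \sum_(x in V1) w1 x.
pose M := S1 + t1 + 1.
pose t := S1 + M * t2.
have Y0E1 : e0 :\ z \in E1.
  rewrite inE (Hz _ (HE _ e0E) ze0 e0E) /=.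
  by rewrite setD1K.
have t1S1 : t1 <= S1.
  rewrite -((Hw1 _ (Hz _ (HE _ e0E) ze0 e0E)).2 Y0E1); exact: sum_le (Hz _ (HE _ e0E) ze0 e0E).
have t1t : t1 < t.
  case: (posnP t2) => [t20|t2p]; last first.
    rewrite /t /M; have : S1 + t1 + 1 <= (S1 + t1 + 1) * t2 by rewrite leq_pmulr.
    move=> hm; apply: leq_trans (leq_addl S1 _); apply: leq_trans hm.
    by rewrite addn1 ltnS leq_addl.
  rewrite /t t20 muln0 addn0 ltn_neqAle t1S1 andbT; apply/eqP => t1e.
  have h0 : set0 \in E2 by rewrite -(Hw2 _ (sub0set _)) big_set0.
  move: h0; rewrite inE setU0 => /andP[_ V1E].
  have Y0V1 : e0 :\ z = V1.
    apply: (sum_eq_sub (w := w1)) => //; first exact: (Hz _ (HE _ e0E) ze0 e0E).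
    by rewrite ((Hw1 _ (Hz _ (HE _ e0E) ze0 e0E)).2 Y0E1).
  have : V1 \subset e0 by rewrite -Y0V1 subD1set.
  move/(sp_sub HS V1E e0E) => V1e0; move: zV1; by rewrite V1e0 ze0.
pose c := t - t1.
pose w := fun x => if x \in V1 then w1 x else if x \in V2 then M * w2 x
                   else if x == z then c else 0.
exists w, t; split.
  move=> x xU; rewrite /w; case: ifP => xV1; first exact: wp1.
  case: ifP => xV2; first by rewrite muln_gt0 wp2 // andbT /M addn1.
  case: eqP => [_|xz]; first by rewrite /c subn_gt0.
  have : x \in V2 by rewrite /V2 in_setD xV1 in_setD1 xU andbT; apply/eqP.
  by rewrite xV2.
have Hsum : forall X, \sum_(x in X) w x =
   \sum_(x in X :&: V1) w1 x + M * \sum_(x in X :&: V2) w2 x + (if z \in X then c else 0).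
  move=> X.
  have -> : \sum_(x in X) w x = \sum_(x in X) ((if x \in V1 then w1 x else 0) +
     (if x \in V2 then M * w2 x else 0) + (if x == z then c else 0)).
    apply: eq_bigr => x _; rewrite /w.
    case: ifP => xV1.
      have xV2 : x \in V2 = false by apply: (disjointFr dV12).
      have xz : (x == z) = false by apply/eqP => xz; move: zV1; rewrite -xz xV1.
      by rewrite xV2 xz !addn0.
    case: ifP => xV2; last by [].
    have xz : (x == z) = false by apply/eqP => xz; move: zV2; rewrite -xz xV2.
    by rewrite xz addn0.
  rewrite !big_split /=; congr (_ + _ + _).
  - by rewrite -big_mkcondr; apply: eq_bigl => x; rewrite in_setI.
  - by rewrite big_distrr /= -big_mkcondr; apply: eq_bigl => x; rewrite in_setI.
  - rewrite -big_mkcondr; case: (boolP (z \in X)) => zX.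
      by rewrite (big_pred1 z) // => x /=; case: eqP => [->|]; rewrite ?zX ?andbF.
    rewrite big_pred0 // => x /=; case: eqP => [->|]; by rewrite ?(negbTE zX) ?andbF.
move=> X XU; rewrite Hsum.
have X1V1 : X :&: V1 \subset V1 by apply: subsetIr.
have X2V2 : X :&: V2 \subset V2 by apply: subsetIr.
case: (boolP (z \in X)) => zX.
  split.
  - move=> h.
    have s20 : \sum_(x in X :&: V2) w2 x = 0.
      apply/eqP; apply/negPn/negP => /eqP; move: h; rewrite /c.
      move: (\sum_(x in X :&: V2) w2 x) => s2 h hs2.
      have hM : M <= M * s2 by rewrite leq_pmulr // lt0n; apply/eqP.
      have hMt : t1 < M by rewrite /M addn1 ltnS leq_addl.
      exact: (ar1 hM hMt t1t h).
    have X20 : X :&: V2 = set0.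
      by apply: (sum_eq0 (w := w2)) => // x xX2; apply: wp2; apply: (subsetP X2V2).
    rewrite s20 muln0 addn0 /c in h.
    have s1 : \sum_(x in X :&: V1) w1 x = t1.
      exact: (ar2 t1t h).
    move: ((Hw1 _ X1V1).1 s1); rewrite inE => /andP[_ hE].
    suff -> : X = [set z] :|: (X :&: V1) by [].
    apply/setP => x; rewrite in_setU in_set1 in_setI; case: eqP => [->|xz] //=.
    case: (boolP (x \in X)) => xX //=; apply/esym/negPn/negP => xV1.
    have : x \in X :&: V2.
      by rewrite in_setI xX /V2 in_setD xV1 in_setD1 (subsetP XU) // andbT; apply/eqP.
    by rewrite X20 inE.
  - move=> XE; have XV1 := Hz _ XU zX XE.
    have X1 : X :&: V1 = X :\ z.
      apply/setP => x; rewrite in_setI in_setD1; case: eqP => [->|xz] /=; first by rewrite (negbTE zV1) andbF.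
      case: (boolP (x \in X)) => //= xX; apply: (subsetP XV1); rewrite in_setD1 xX andbT; exact/eqP.
    have X2 : X :&: V2 = set0.
      apply/setP => x; rewrite in_setI in_set0 /V2 in_setD; apply/negbTE; apply/negP => /and3P[xX xnV1 xUz].
      move: xnV1; rewrite (subsetP XV1) // in_setD1 xX andbT.
      by move: xUz; rewrite in_setD1 => /andP[].
    have X1E : X :&: V1 \in E1 by rewrite inE X1V1 X1 setD1K.
    rewrite ((Hw1 _ X1V1).2 X1E) X2 big_set0 muln0 addn0 /c subnKC //; exact: ltnW.
split.
- move=> h; rewrite addn0 in h.
  have hs1 : \sum_(x in X :&: V1) w1 x <= S1 by apply: sum_le.
  have [e1 e2] : \sum_(x in X :&: V1) w1 x = S1 /\ \sum_(x in X :&: V2) w2 x = t2.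
    apply: (modeq (M := M)).
    - by rewrite /M addn1 ltnS (leq_trans hs1) // leq_addr.
    - by rewrite /M addn1 ltnS leq_addr.
    - exact: h.
  have X1 : X :&: V1 = V1 by apply: (sum_eq_sub (w := w1)).
  move: ((Hw2 _ X2V2).1 e2); rewrite inE => /andP[_ hE].
  suff -> : X = V1 :|: (X :&: V2) by [].
  apply/setP => x; rewrite in_setU in_setI; case: (boolP (x \in V1)) => xV1 /=.
    have : x \in X :&: V1 by rewrite X1.
    by rewrite in_setI => /andP[].
  case: (boolP (x \in X)) => xX //=.
  apply/esym; rewrite /V2 in_setD xV1 in_setD1 (subsetP XU _ xX) andbT /=.
  by apply/eqP => xz; move: zX; rewrite -xz xX.
- move=> XE; have V1X := Hnz _ XE zX.
  have X1 : X :&: V1 = V1 by apply/setIidPr.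
  have X2E : X :&: V2 \in E2.
    rewrite inE X2V2 /=; suff <- : X = V1 :|: (X :&: V2) by [].
    apply/setP => x; rewrite in_setU in_setI; case: (boolP (x \in V1)) => xV1 /=.
      by rewrite (subsetP V1X).
    case: (boolP (x \in X)) => xX //=.
    apply/esym; rewrite /V2 in_setD xV1 in_setD1 (subsetP XU _ xX) andbT /=.
    by apply/eqP => xz; move: zX; rewrite -xz xX.
  by rewrite X1 ((Hw2 _ X2V2).2 X2E) addn0.
Qed.

End S.


Unset Implicit Arguments.

Theorem proposition12 (V : finType) (E : {set {set V}}) :
  one_Sperner E -> equilizable E.
Proof.
move=> HS.
have := @main V #|[set: V]| [set: V] E (leqnn _) HS (fun e _ => subsetT e).
case=> w [t [_ H]].
exists w, t => X; exact: H (subsetT X).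
Qed.
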